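(* Let $s\ge0$ and let $(X_1,X_2,X_3,Y,U_1,U_2,U_3,U_4)$ have joint distribution factorizing as $$P_{X_1,X_2,X_3,Y}\,P_{U_1|X_1}\,P_{U_2|X_2}\,P_{U_3|X_3}\,P_{U_4|U_2,U_3}.$$ Then, with $\mathbf P=\{P_{U_1|X_1},P_{U_2|X_2},P_{U_3|X_3}\}$, $$\mathcal L_s(\mathbf P)\ \ge\ \mathcal L_s^{\rm low}(\mathbf P,P_{U_4|U_2,U_3}),$$ where $$\mathcal L_s(\mathbf P)=-H(Y|U_1,U_2,U_3)-s\big[I(X_1,X_2,X_3;U_1,U_2,U_3)+I(X_2,X_3;U_2,U_3|U_1)\big]$$ and $$\mathcal L_s^{\rm low}(\mathbf P,P_{U_4|U_2,U_3})=-H(Y|U_1,U_4)-sI(X_1;U_1)-2s\big[I(X_2;U_2)+I(X_3;U_3)\big]+2s\big[I(U_2;U_1)+I(U_3;U_1,U_2)\big].$$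
   Context: All random variables take values in finite sets; all information quantities are computed under the stated joint distribution. *)

(* Defs.v *)
From mathcomp Require Import all_boot all_order all_algebra.
From mathcomp Require Import reals exp.
Set Implicit Arguments. Unset Strict Implicit. Unset Printing Implicit Defensive.
Import Order.TTheory GRing.Theory Num.Theory.
Local Open Scope ring_scope.

Section Info.
Variable R : realType.

Definition xlnx (x : R) : R := if x == 0 then 0 else x * ln x.

Variable Om : finType.
Variable p : Om -> R.

Definition pmf_of (A : finType) (f : Om -> A) (a : A) : R :=
  \sum_(w | f w == a) p w.

Definition ent (A : finType) (f : Om -> A) : R :=
  - \sum_(a : A) xlnx (pmf_of f a).

Definition cent (A B : finType) (f : Om -> A) (g : Om -> B) : R :=
  ent (fun w => (f w, g w)) - ent g.

Definition minf (A B : finType) (f : Om -> A) (g : Om -> B) : R :=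
  ent f + ent g - ent (fun w => (f w, g w)).

Definition cminf (A B C : finType) (f : Om -> A) (g : Om -> B) (h : Om -> C) : R :=
  ent (fun w => (f w, h w)) + ent (fun w => (g w, h w))
  - ent (fun w => (f w, g w, h w)) - ent h.
End Info.

Section Model.
Variables (R : realType) (X1 X2 X3 Y U1 U2 U3 U4 : finType).

Definition Omega : finType := (X1 * X2 * X3 * Y * U1 * U2 * U3 * U4)%type.

Definition vX1 (w : Omega) : X1 := w.1.1.1.1.1.1.1.
Definition vX2 (w : Omega) : X2 := w.1.1.1.1.1.1.2.
Definition vX3 (w : Omega) : X3 := w.1.1.1.1.1.2.
Definition vY  (w : Omega) : Y  := w.1.1.1.1.2.
Definition vU1 (w : Omega) : U1 := w.1.1.1.2.
Definition vU2 (w : Omega) : U2 := w.1.1.2.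
Definition vU3 (w : Omega) : U3 := w.1.2.
Definition vU4 (w : Omega) : U4 := w.2.

Definition joint (PX : X1 * X2 * X3 * Y -> R)
  (W1 : X1 -> U1 -> R) (W2 : X2 -> U2 -> R) (W3 : X3 -> U3 -> R)
  (W4 : U2 -> U3 -> U4 -> R) (w : Omega) : R :=
  PX (vX1 w, vX2 w, vX3 w, vY w) * W1 (vX1 w) (vU1 w) * W2 (vX2 w) (vU2 w)
  * W3 (vX3 w) (vU3 w) * W4 (vU2 w) (vU3 w) (vU4 w).

Definition Ls (s : R) (P : Omega -> R) : R :=
  - cent P vY (fun w => (vU1 w, vU2 w, vU3 w))
  - s * (minf P (fun w => (vX1 w, vX2 w, vX3 w)) (fun w => (vU1 w, vU2 w, vU3 w))
         + cminf P (fun w => (vX2 w, vX3 w)) (fun w => (vU2 w, vU3 w)) vU1).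

Definition Llow (s : R) (P : Omega -> R) : R :=
  - cent P vY (fun w => (vU1 w, vU4 w))
  - s * minf P vX1 vU1
  - 2 * s * (minf P vX2 vU2 + minf P vX3 vU3)
  + 2 * s * (minf P vU2 vU1 + minf P vU3 (fun w => (vU1 w, vU2 w))).
End Model.

(* Main.v *)
Require Import Defs.
From mathcomp Require Import all_boot all_order all_algebra.
From mathcomp Require Import reals exp.
From mathcomp Require Import ring lra.
Set Implicit Arguments. Unset Strict Implicit. Unset Printing Implicit Defensive.
Import Order.TTheory GRing.Theory Num.Theory.
Local Open Scope ring_scope.
Definition PP (R : realType) (Om : finType) (p : Om -> R) (A : finType) (f : Om -> A) (w : Om) : R :=
  pmf_of p f (f w).

Lemma xlnxE (R : realType) (x : R) : xlnx x = x * ln x.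
Proof. by rewrite /xlnx; case: eqP => [->|]; rewrite ?mul0r. Qed.

Lemma sum_pmf (R : realType) (Om : finType) (p : Om -> R) (A : finType) (f : Om -> A) (G : A -> R) :
  \sum_w p w * G (f w) = \sum_a pmf_of p f a * G a.
Proof.
rewrite (partition_big f xpredT) //=; apply: eq_bigr => a _.
rewrite /pmf_of big_distrl /=; apply: eq_bigr => w /eqP <-; done.
Qed.

Lemma entE (R : realType) (Om : finType) (p : Om -> R) (A : finType) (f : Om -> A) :
  ent p f = - \sum_w p w * ln (PP p f w).
Proof.
rewrite /ent /PP (sum_pmf p f (fun a => ln (pmf_of p f a))); congr (- _).
by apply: eq_bigr => a _; rewrite xlnxE.
Qed.

Lemma PP_ge (R : realType) (Om : finType) (p : Om -> R) (A : finType) (f : Om -> A) w :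
  (forall w, 0 <= p w) -> p w <= PP p f w.
Proof.
move=> p0; rewrite /PP /pmf_of (bigD1 w) //= lerDl; apply: sumr_ge0 => *; exact: p0.
Qed.

Lemma PP_eqv (R : realType) (Om : finType) (p : Om -> R) (A B : finType) (f : Om -> A) (g : Om -> B)
  (h : A -> B) (k : B -> A) :
  (forall w, g w = h (f w)) -> (forall w, f w = k (g w)) -> forall w, PP p g w = PP p f w.
Proof.
move=> gh fk w; rewrite /PP /pmf_of; apply: eq_bigl => w'.
apply/eqP/eqP => E.
  by rewrite fk E -fk.
by rewrite gh E -gh.
Qed.

Lemma ent_id4 (R : realType) (Om : finType) (p : Om -> R) (p0 : forall w, 0 <= p w)
  (A1 A2 A3 A4 B1 B2 B3 B4 : finType)
  (f1 : Om -> A1) (f2 : Om -> A2) (f3 : Om -> A3) (f4 : Om -> A4)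
  (g1 : Om -> B1) (g2 : Om -> B2) (g3 : Om -> B3) (g4 : Om -> B4) :
  (forall w, 0 < p w -> PP p f1 w * PP p f2 w * PP p f3 w * PP p f4 w
                      = PP p g1 w * PP p g2 w * PP p g3 w * PP p g4 w) ->
  ent p f1 + ent p f2 + ent p f3 + ent p f4 = ent p g1 + ent p g2 + ent p g3 + ent p g4.
Proof.
move=> H; rewrite !entE -!opprD -!big_split /=; congr (- _); apply: eq_bigr => w _.
rewrite -!mulrDr; have [->|pw] := eqVneq (p w) 0; first by rewrite !mul0r.
have pwp : 0 < p w by rewrite lt0r pw p0.
have pos : forall (A : finType) (h : Om -> A), PP p h w \in Num.pos.
  by move=> A h; rewrite posrE; apply: lt_le_trans pwp (PP_ge _ _ p0).
have posM : forall x y : R, x \in Num.pos -> y \in Num.pos -> x * y \in Num.pos.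
  by move=> x y; rewrite !posrE; apply: mulr_gt0.
by rewrite -!lnM ?posM ?pos // H.
Qed.

Lemma marg (R : realType) (Om : finType) (p : Om -> R) (A C : finType) (f : Om -> A) (h : Om -> C) c :
  \sum_a pmf_of p (fun w => (f w, h w)) (a, c) = pmf_of p h c.
Proof.
rewrite /pmf_of [RHS](partition_big f xpredT) //=.
by apply: eq_bigr => a _; apply: eq_bigl => w; rewrite xpair_eqE andbC.
Qed.

Lemma pmf_ge0 (R : realType) (Om : finType) (p : Om -> R) (p0 : forall w, 0 <= p w) (A : finType) (f : Om -> A) a :
  0 <= pmf_of p f a.
Proof. by apply: sumr_ge0 => *; apply: p0. Qed.

Lemma ln_le_sub1 (R : realType) (x : R) : 0 < x -> ln x <= x - 1.
Proof. move=> x0; have := @le_ln1Dx R (x - 1); rewrite addrCA subrr addr0; apply; by rewrite ltrBrDr addrC subrr. Qed.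

Lemma muldiv_le (R : realType) (x a c : R) : 0 <= x -> 0 <= a -> 0 <= c -> x * (a / (x * c)) <= a / c.
Proof.
move=> x0 a0 c0; have [->|xn] := eqVneq x 0; first by rewrite mul0r divr_ge0.
have [->|cn] := eqVneq c 0; first by rewrite mulr0 invr0 !mulr0.
by rewrite le_eqVlt; apply/orP; left; apply/eqP; field; apply/andP.
Qed.

Lemma sqdiv_le (R : realType) (x : R) : 0 <= x -> x * x / x <= x.
Proof.
move=> x0; have [->|xn] := eqVneq x 0; first by rewrite mul0r mul0r.
by rewrite mulfK.
Qed.

Lemma cminf_ge0 (R : realType) (Om : finType) (p : Om -> R) (p0 : forall w, 0 <= p w)
  (A B C : finType) (f : Om -> A) (g : Om -> B) (h : Om -> C) :
  0 <= cminf p f g h.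
Proof.
pose k := fun w => (f w, g w, h w).
pose F := fun v : A * B * C =>
  pmf_of p (fun w => (f w, h w)) (v.1.1, v.2) * pmf_of p (fun w => (g w, h w)) (v.1.2, v.2)
  / (pmf_of p k v * pmf_of p h v.2).
have step1 : \sum_w (p w - p w * F (k w)) <= cminf p f g h.
  rewrite /cminf !entE /=.
  have -> : (- \sum_w p w * ln (PP p (fun w => (f w, h w)) w)
      + - \sum_w p w * ln (PP p (fun w => (g w, h w)) w)
      - - \sum_w p w * ln (PP p (fun w => (f w, g w, h w)) w)
      - - \sum_w p w * ln (PP p h w))
    = \sum_w p w * (ln (PP p (fun w => (f w, g w, h w)) w) + ln (PP p h w)
           - ln (PP p (fun w => (f w, h w)) w) - ln (PP p (fun w => (g w, h w)) w)).
    under [RHS]eq_bigr do rewrite !mulrDr !mulrN.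
    rewrite !big_split /= !sumrN; ring.
  apply: ler_sum => w _.
  have [->|pw] := eqVneq (p w) 0; first by rewrite !mul0r subrr.
  have pwp : 0 < p w by rewrite lt0r pw p0.
  have pos : forall (D : finType) (e : Om -> D), 0 < PP p e w.
    by move=> D e; apply: lt_le_trans pwp (PP_ge _ _ p0).
  rewrite -{1}(mulr1 (p w)) -mulrBr ler_pM2l //.
  set a := PP p (fun w => (f w, h w)) w; set b := PP p (fun w => (g w, h w)) w.
  set c := PP p (fun w => (f w, g w, h w)) w; set d := PP p h w.
  have -> : F (k w) = a * b / (c * d) by [].
  have ap : 0 < a by apply: pos.
  have bp : 0 < b by apply: pos.
  have cp : 0 < c by apply: pos.
  have dp : 0 < d by apply: pos.
  have := ln_le_sub1 (x := a * b / (c * d)) (divr_gt0 (mulr_gt0 ap bp) (mulr_gt0 cp dp)).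
  rewrite ln_div ?posrE ?mulr_gt0 // !lnM ?posrE //.
  move=> H; lra.
have step2 : \sum_w p w * F (k w) <= \sum_w p w.
  rewrite (sum_pmf p k F).
  apply: (@le_trans _ _ (\sum_(v : A * B * C) pmf_of p (fun w => (f w, h w)) (v.1.1, v.2)
          * pmf_of p (fun w => (g w, h w)) (v.1.2, v.2) / pmf_of p h v.2)).
    apply: ler_sum => v _; rewrite /F; apply: muldiv_le; rewrite ?mulr_ge0 ?pmf_ge0 //.
  rewrite -(pair_bigA _ (fun (ab : A * B) (c : C) => pmf_of p (fun w => (f w, h w)) (ab.1, c)
          * pmf_of p (fun w => (g w, h w)) (ab.2, c) / pmf_of p h c)) /=.
  rewrite -(pair_bigA _ (fun (a : A) (b : B) => \sum_(c : C) pmf_of p (fun w => (f w, h w)) (a, c)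
          * pmf_of p (fun w => (g w, h w)) (b, c) / pmf_of p h c)) /=.
  have -> : \sum_(a : A) \sum_(b : B) \sum_(c : C) pmf_of p (fun w => (f w, h w)) (a, c)
          * pmf_of p (fun w => (g w, h w)) (b, c) / pmf_of p h c
      = \sum_(c : C) (\sum_(a : A) pmf_of p (fun w => (f w, h w)) (a, c))
          * (\sum_(b : B) pmf_of p (fun w => (g w, h w)) (b, c)) / pmf_of p h c.
    symmetry.
    under eq_bigr => c _ do rewrite big_distrl /= big_distrl /=.
    rewrite exchange_big /=; apply: eq_bigr => a _.
    under eq_bigr => c _ do rewrite big_distrr /= big_distrl /=.
    by rewrite exchange_big /=.
  apply: (@le_trans _ _ (\sum_(c : C) pmf_of p h c)).
    by apply: ler_sum => c _; rewrite !marg; apply: sqdiv_le; apply: pmf_ge0.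
  have E : \sum_w p w * 1 = \sum_c pmf_of p h c * 1 := sum_pmf p h (fun _ => 1).
  under [X in X <= _]eq_bigr => c _ do rewrite -(mulr1 (pmf_of p h c)).
  by rewrite -E; under [X in X <= _]eq_bigr do rewrite mulr1.
have : \sum_w (p w - p w * F (k w)) >= 0.
  by rewrite sumrB subr_ge0.
move=> H; exact: le_trans H step1.
Qed.

Lemma peel_free (R : realType) (T U D A : finType) (q : T -> R) (K : D -> U -> R) (c : T -> D)
  (p : T * U -> R) (hp : forall t u, p (t, u) = q t * K (c t) u)
  (hK : forall d, \sum_u K d u = 1) (g : T -> A) t u :
  PP p (fun w => g w.1) (t, u) = PP q g t.
Proof.
rewrite /PP /pmf_of /=.
transitivity (\sum_(t' | g t' == g t) \sum_(u' | true) p (t', u')).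
  rewrite pair_big /=; apply: eq_big => [[t' u']|[t' u'] _] //=; by rewrite andbT.
apply: eq_bigr => t' _; under eq_bigr do rewrite hp; by rewrite -big_distrr /= hK mulr1.
Qed.

Lemma peel_keep (R : realType) (T U D A : finType) (q : T -> R) (K : D -> U -> R) (c : T -> D)
  (p : T * U -> R) (hp : forall t u, p (t, u) = q t * K (c t) u)
  (g : T -> A) (hc : forall t1 t2, g t1 = g t2 -> c t1 = c t2) t u :
  PP p (fun w => (g w.1, w.2)) (t, u) = K (c t) u * PP q g t.
Proof.
rewrite /PP /pmf_of /=.
transitivity (\sum_(t' | g t' == g t) \sum_(u' | u' == u) p (t', u')).
  rewrite pair_big /=; apply: eq_big => [[t' u']|[t' u'] _] //=; by rewrite xpair_eqE.
rewrite big_distrr /=; apply: eq_bigr => t' /eqP E.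
by rewrite big_pred1_eq hp (hc _ _ E) mulrC.
Qed.

Definition fr (T U A : finType) (g : T -> A) : T * U -> A := fun w => g w.1.
Definition kp (T U A : finType) (g : T -> A) : T * U -> A * U := fun w => (g w.1, w.2).
Arguments fr {T} U {A} g.
Arguments kp {T} U {A} g.

Lemma peel_fr (R : realType) (T U D A : finType) (q : T -> R) (K : D -> U -> R) (c : T -> D)
  (p : T * U -> R) (hp : forall t u, p (t, u) = q t * K (c t) u)
  (hK : forall d, \sum_u K d u = 1) (g : T -> A) t u :
  PP p (fr U g) (t, u) = PP q g t.
Proof. exact: (@peel_free R T U D A q K c p hp hK g t u). Qed.

Lemma peel_kp (R : realType) (T U D A : finType) (q : T -> R) (K : D -> U -> R) (c : T -> D)
  (p : T * U -> R) (hp : forall t u, p (t, u) = q t * K (c t) u)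
  (g : T -> A) (hc : forall t1 t2, g t1 = g t2 -> c t1 = c t2) t u :
  PP p (kp U g) (t, u) = K (c t) u * PP q g t.
Proof. exact: (@peel_keep R T U D A q K c p hp g hc t u). Qed.

Lemma PP_eqv2 (R : realType) (Om : finType) (p : Om -> R) (A B : finType) (f : Om -> A) (g : Om -> B) :
  (forall w1 w2, f w1 = f w2 <-> g w1 = g w2) -> forall w, PP p f w = PP p g w.
Proof.
move=> H w; rewrite /PP /pmf_of; apply: eq_bigl => w'.
by apply/eqP/eqP => /H.
Qed.

Lemma ent_eqv (R : realType) (Om : finType) (p : Om -> R) (A B : finType) (f : Om -> A) (g : Om -> B) :
  (forall w1 w2, f w1 = f w2 <-> g w1 = g w2) -> ent p f = ent p g.
Proof.
move=> H; rewrite !entE; congr (- _); apply: eq_bigr => w _; by rewrite (PP_eqv2 p H).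
Qed.
Definition gB {X1 X2 X3 Y U1 : finType} (t : X1 * X2 * X3 * Y * U1) : X2 * X3 * U1 :=
  ((t.1.1.1.2, t.1.1.2), t.2).
Definition gYU {X1 X2 X3 Y U1 U2 U3 : finType} (t : X1 * X2 * X3 * Y * U1 * U2 * U3) : Y * (U1 * U2 * U3) :=
  (t.1.1.1.2, ((t.1.1.2, t.1.2), t.2)).
Definition gU {X1 X2 X3 Y U1 U2 U3 : finType} (t : X1 * X2 * X3 * Y * U1 * U2 * U3) : U1 * U2 * U3 :=
  ((t.1.1.2, t.1.2), t.2).

Notation vx1 := (@vX1 _ _ _ _ _ _ _ _).
Notation vx2 := (@vX2 _ _ _ _ _ _ _ _).
Notation vx3 := (@vX3 _ _ _ _ _ _ _ _).
Notation vy := (@vY _ _ _ _ _ _ _ _).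
Notation vu1 := (@vU1 _ _ _ _ _ _ _ _).
Notation vu2 := (@vU2 _ _ _ _ _ _ _ _).
Notation vu3 := (@vU3 _ _ _ _ _ _ _ _).
Notation vu4 := (@vU4 _ _ _ _ _ _ _ _).

Ltac eqv8 := move=> [[[[[[[? ?] ?] ?] ?] ?] ?] ?] [[[[[[[? ?] ?] ?] ?] ?] ?] ?];
  unfold fr, kp, gB, gYU, gU, vX1, vX2, vX3, vY, vU1, vU2, vU3, vU4; simpl;
  split => ?; congruence.

Ltac peel hp5 hp6 hp7 hp8 hW11 hW21 hW31 hK8 c5 c6 c7 c8 :=
  repeat first [ rewrite (peel_fr hp8 hK8) | rewrite (peel_fr hp7 hW31)
               | rewrite (peel_fr hp6 hW21) | rewrite (peel_fr hp5 hW11)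
               | rewrite (peel_kp hp8); [| by unfold fr, kp, gB, gYU, gU, c5, c6, c7, c8; simpl; intros t1 t2 H; try (injection H; intros); repeat match goal with E : _ = _ |- _ => progress rewrite E end; reflexivity]
               | rewrite (peel_kp hp7); [| by unfold fr, kp, gB, gYU, gU, c5, c6, c7, c8; simpl; intros t1 t2 H; try (injection H; intros); repeat match goal with E : _ = _ |- _ => progress rewrite E end; reflexivity]
               | rewrite (peel_kp hp6); [| by unfold fr, kp, gB, gYU, gU, c5, c6, c7, c8; simpl; intros t1 t2 H; try (injection H; intros); repeat match goal with E : _ = _ |- _ => progress rewrite E end; reflexivity]
               | rewrite (peel_kp hp5); [| by unfold fr, kp, gB, gYU, gU, c5, c6, c7, c8; simpl; intros t1 t2 H; try (injection H; intros); repeat match goal with E : _ = _ |- _ => progress rewrite E end; reflexivity] ].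

Theorem lemma1 (R : realType) (X1 X2 X3 Y U1 U2 U3 U4 : finType)
  (PX : X1 * X2 * X3 * Y -> R)
  (W1 : X1 -> U1 -> R) (W2 : X2 -> U2 -> R) (W3 : X3 -> U3 -> R)
  (W4 : U2 -> U3 -> U4 -> R) (s : R)
  (hs : 0 <= s)
  (hPX0 : forall x, 0 <= PX x) (hPX1 : \sum_(x : X1 * X2 * X3 * Y) PX x = 1)
  (hW10 : forall x u, 0 <= W1 x u) (hW11 : forall x, \sum_(u : U1) W1 x u = 1)
  (hW20 : forall x u, 0 <= W2 x u) (hW21 : forall x, \sum_(u : U2) W2 x u = 1)
  (hW30 : forall x u, 0 <= W3 x u) (hW31 : forall x, \sum_(u : U3) W3 x u = 1)
  (hW40 : forall a b u, 0 <= W4 a b u)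
  (hW41 : forall a b, \sum_(u : U4) W4 a b u = 1) :
  Llow s (joint PX W1 W2 W3 W4) <= Ls s (joint PX W1 W2 W3 W4).
Proof.
set p := joint PX W1 W2 W3 W4.
have p0 : forall w, 0 <= p w by move=> w; rewrite /p /joint !mulr_ge0.
pose T4 := (X1 * X2 * X3 * Y)%type.
pose q5 := fun t : T4 * U1 => PX t.1 * W1 t.1.1.1.1 t.2.
pose q6 := fun t : T4 * U1 * U2 => q5 t.1 * W2 t.1.1.1.1.2 t.2.
pose q7 := fun t : T4 * U1 * U2 * U3 => q6 t.1 * W3 t.1.1.1.1.2 t.2.
pose c5 := fun t : T4 => t.1.1.1.
pose c6 := fun t : T4 * U1 => t.1.1.1.2.
pose c7 := fun t : T4 * U1 * U2 => t.1.1.1.2.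
pose c8 := fun t : T4 * U1 * U2 * U3 => (t.1.2, t.2).
pose K8 := fun (d : U2 * U3) (u : U4) => W4 d.1 d.2 u.
have hp5 : forall t u, q5 (t, u) = PX t * W1 (c5 t) u by [].
have hp6 : forall t u, q6 (t, u) = q5 t * W2 (c6 t) u by [].
have hp7 : forall t u, q7 (t, u) = q6 t * W3 (c7 t) u by [].
have hp8 : forall t u, p (t, u) = q7 t * K8 (c8 t) u.
  by move=> [[[[[[x1 x2] x3] y] u1] u2] u3] u4.
have hK8 : forall d : U2 * U3, \sum_u K8 d u = 1.
  by move=> d; exact: hW41.
have S1 : ent p (fun w => ((vx1 w, vx2 w, vx3 w), (vu1 w, vu2 w, vu3 w))) + ent p vx1 + ent p vx2 + ent p vx3
        = ent p (fun w => (vx1 w, vx2 w, vx3 w)) + ent p (fun w => (vx1 w, vu1 w))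
          + ent p (fun w => (vx2 w, vu2 w)) + ent p (fun w => (vx3 w, vu3 w)).
  rewrite (@ent_eqv _ _ p _ _ (fun w => ((vx1 w, vx2 w, vx3 w), (vu1 w, vu2 w, vu3 w))) (fr U4 (kp U3 (kp U2 (kp U1 (fun t : T4 => t.1)))))); last eqv8.
  rewrite (@ent_eqv _ _ p _ _ (vx1) (fr U4 (fr U3 (fr U2 (fr U1 (fun t : T4 => t.1.1.1)))))); last eqv8.
  rewrite (@ent_eqv _ _ p _ _ (vx2) (fr U4 (fr U3 (fr U2 (fr U1 (fun t : T4 => t.1.1.2)))))); last eqv8.
  rewrite (@ent_eqv _ _ p _ _ (vx3) (fr U4 (fr U3 (fr U2 (fr U1 (fun t : T4 => t.1.2)))))); last eqv8.
  rewrite (@ent_eqv _ _ p _ _ (fun w => (vx1 w, vx2 w, vx3 w)) (fr U4 (fr U3 (fr U2 (fr U1 (fun t : T4 => t.1)))))); last eqv8.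
  rewrite (@ent_eqv _ _ p _ _ (fun w => (vx1 w, vu1 w)) (fr U4 (fr U3 (fr U2 (kp U1 (fun t : T4 => t.1.1.1)))))); last eqv8.
  rewrite (@ent_eqv _ _ p _ _ (fun w => (vx2 w, vu2 w)) (fr U4 (fr U3 (kp U2 (fr U1 (fun t : T4 => t.1.1.2)))))); last eqv8.
  rewrite (@ent_eqv _ _ p _ _ (fun w => (vx3 w, vu3 w)) (fr U4 (kp U3 (fr U2 (fr U1 (fun t : T4 => t.1.2)))))); last eqv8.
  apply: (ent_id4 p0) => -[[[[t u1] u2] u3] u4] _.
  peel hp5 hp6 hp7 hp8 hW11 hW21 hW31 hK8 c5 c6 c7 c8.
  ring.
have S2 : ent p (fun w => ((vx2 w, vx3 w), (vu2 w, vu3 w), vu1 w)) + ent p vx2 + ent p vx3 + ent p vx1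
        = ent p (fun w => ((vx2 w, vx3 w), vu1 w)) + ent p (fun w => (vx2 w, vu2 w))
          + ent p (fun w => (vx3 w, vu3 w)) + ent p vx1.
  rewrite (@ent_eqv _ _ p _ _ (fun w => ((vx2 w, vx3 w), (vu2 w, vu3 w), vu1 w)) (fr U4 (kp U3 (kp U2 gB)))); last eqv8.
  rewrite (@ent_eqv _ _ p _ _ (vx1) (fr U4 (fr U3 (fr U2 (fr U1 (fun t : T4 => t.1.1.1)))))); last eqv8.
  rewrite (@ent_eqv _ _ p _ _ (vx2) (fr U4 (fr U3 (fr U2 (fr U1 (fun t : T4 => t.1.1.2)))))); last eqv8.
  rewrite (@ent_eqv _ _ p _ _ (vx3) (fr U4 (fr U3 (fr U2 (fr U1 (fun t : T4 => t.1.2)))))); last eqv8.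
  rewrite (@ent_eqv _ _ p _ _ (fun w => ((vx2 w, vx3 w), vu1 w)) (fr U4 (fr U3 (fr U2 gB)))); last eqv8.
  rewrite (@ent_eqv _ _ p _ _ (fun w => (vx2 w, vu2 w)) (fr U4 (fr U3 (kp U2 (fr U1 (fun t : T4 => t.1.1.2)))))); last eqv8.
  rewrite (@ent_eqv _ _ p _ _ (fun w => (vx3 w, vu3 w)) (fr U4 (kp U3 (fr U2 (fr U1 (fun t : T4 => t.1.2)))))); last eqv8.
  apply: (ent_id4 p0) => -[[[[t u1] u2] u3] u4] _.
  peel hp5 hp6 hp7 hp8 hW11 hW21 hW31 hK8 c5 c6 c7 c8.
  ring.
have M : ent p (fun w => (vy w, (vu2 w, vu3 w), (vu1 w, vu4 w))) + ent p (fun w => (vu1 w, vu2 w, vu3 w))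
          + ent p vx1 + ent p vx1
       = ent p (fun w => (vy w, (vu1 w, vu2 w, vu3 w))) + ent p (fun w => ((vu2 w, vu3 w), (vu1 w, vu4 w)))
          + ent p vx1 + ent p vx1.
  rewrite (@ent_eqv _ _ p _ _ (fun w => (vy w, (vu2 w, vu3 w), (vu1 w, vu4 w))) (kp U4 gYU)); last eqv8.
  rewrite (@ent_eqv _ _ p _ _ (fun w => (vu1 w, vu2 w, vu3 w)) (fr U4 gU)); last eqv8.
  rewrite (@ent_eqv _ _ p _ _ (fun w => (vy w, (vu1 w, vu2 w, vu3 w))) (fr U4 gYU)); last eqv8.
  rewrite (@ent_eqv _ _ p _ _ (fun w => ((vu2 w, vu3 w), (vu1 w, vu4 w))) (kp U4 gU)); last eqv8.
  apply: (ent_id4 p0) => -[t u4] _.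
  peel hp5 hp6 hp7 hp8 hW11 hW21 hW31 hK8 c5 c6 c7 c8.
  ring.
have R1 : ent p (fun w => (vu2 w, vu1 w)) = ent p (fun w => (vu1 w, vu2 w)) by apply: ent_eqv; eqv8.
have R2 : ent p (fun w => (vu3 w, (vu1 w, vu2 w))) = ent p (fun w => (vu1 w, vu2 w, vu3 w)) by apply: ent_eqv; eqv8.
have R3 : ent p (fun w => ((vu2 w, vu3 w), vu1 w)) = ent p (fun w => (vu1 w, vu2 w, vu3 w)) by apply: ent_eqv; eqv8.
have C := cminf_ge0 p0 vy (fun w => (vu2 w, vu3 w)) (fun w => (vu1 w, vu4 w)).
rewrite /cminf in C.
have eXU : ent p (fun w => ((vx1 w, vx2 w, vx3 w), (vu1 w, vu2 w, vu3 w)))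
   = ent p (fun w => (vx1 w, vx2 w, vx3 w)) + ent p (fun w => (vx1 w, vu1 w))
          + ent p (fun w => (vx2 w, vu2 w)) + ent p (fun w => (vx3 w, vu3 w))
     - ent p vx1 - ent p vx2 - ent p vx3 by lra.
have eX23 : ent p (fun w => ((vx2 w, vx3 w), (vu2 w, vu3 w), vu1 w))
   = ent p (fun w => ((vx2 w, vx3 w), vu1 w)) + ent p (fun w => (vx2 w, vu2 w))
          + ent p (fun w => (vx3 w, vu3 w)) - ent p vx2 - ent p vx3.
  lra.
rewrite /Llow /Ls /cent /minf /cminf /=.
rewrite eXU eX23 R1 R2 R3.
rewrite -subr_ge0.
lra.
Qed.
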